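(* Let $k$ be a field. The following are equivalent: (i) for every finite group $G$ there exists a finite separable extension $L/k$ with $\mathrm{Aut}(L/k)\cong G$; (ii) there exists a family $\{\Gamma_n\}_{n\ge1}$ of finite groups satisfying property (RÉAL) and such that every $\Gamma_n$ is the Galois group of some finite Galois extension of $k$.
   Context: A family $\{\Gamma_n\}_{n\geq1}$ of finite groups satisfies property (RÉAL) if for every finite group $G$ there exist an integer $n\ge1$ and a subgroup $H$ of $\Gamma_n$ such that $N_{\Gamma_n}(H)/H\cong G$, where $N_{\Gamma_n}(H)$ denotes the normalizer of $H$ in $\Gamma_n$. *)

(* Defs.v *)
From HB Require Import structures.
From mathcomp Require Import all_boot all_order all_algebra all_fingroup all_solvable all_field.
Set Implicit Arguments. Unset Strict Implicit. Unset Printing Implicit Defensive.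
Import GRing.Theory.

(* Aut(L/k) ≅ G, for a finite extension L of F (L : fieldExtType F):
   an injective group homomorphism phi from G into the k-automorphisms of L
   (w.r.t. composition) whose image is the whole set of k-automorphisms of L.
   kAut 1 fullv f  <=>  f is an F-algebra automorphism of L. *)
Definition kAut_isog (F : fieldType) (L : fieldExtType F)
    (gT : finGroupType) (G : {group gT}) : Prop :=
  exists phi : gT -> 'End(L),
    [/\ {in G, forall x, kAut 1%VS fullv (phi x)},
        {in G &, forall x y, phi (x * y)%g = (phi x \o phi y)%VF},
        {in G &, injective phi}
      & forall f : 'End(L), kAut 1%VS fullv f -> exists2 x, x \in G & phi x = f].

(* Property (REAL) for a family (Gamma_n)_{n >= 1} of finite groups
   (the value at n = 0 is irrelevant). Gamma_n is the whole group [set: Gamma n],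
   so 'N(H) is the normalizer of H in Gamma_n. *)
Definition REAL (Gamma : nat -> finGroupType) : Prop :=
  forall (gT : finGroupType) (G : {group gT}),
    exists n : nat, (0 < n)%N /\
      exists H : {group Gamma n}, (('N(H) / H)%g \isog G)%g.

(* Main.v *)
Require Import Defs.
From HB Require Import structures.
From mathcomp Require Import all_boot all_order all_algebra all_fingroup all_solvable all_field.
From Stdlib Require Import Classical ClassicalEpsilon.
Set Implicit Arguments. Unset Strict Implicit. Unset Printing Implicit Defensive.
Import GRing.Theory.

Section Helpers.
Local Open Scope ring_scope.
Lemma isog_of_bij (gT rT : finGroupType) (G : {group gT}) (A : {group rT}) (f : gT -> rT) :
  {in G &, {morph f : x y / (x * y)%g}} -> {in G &, injective f} ->
  {in G, forall x, f x \in A} -> (forall y, y \in A -> exists2 x, x \in G & f x = y) ->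
  (G \isog A)%g.
Proof.
move=> fM finj fA fS; apply/isogP; exists (Morphism fM).
  by apply/injmP.
rewrite morphimEdom; apply/eqP; rewrite eqEsubset; apply/andP; split.
  by apply/subsetP=> _ /imsetP[x Gx ->]; exact: fA.
by apply/subsetP=> y /fS[x Gx <-]; apply/imsetP; exists x.
Qed.

Lemma kAut_isog_uniq (F : fieldType) (L : fieldExtType F) (gT rT : finGroupType)
  (G : {group gT}) (A : {group rT}) :
  kAut_isog L G -> kAut_isog L A -> (G \isog A)%g.
Proof.
move=> [phi [phiA phiM phiI phiS]] [psi [psiA psiM psiI psiS]].
have ex x : x \in G -> exists y, (y \in A) && (psi y == phi x).
  by move=> Gx; have [y Ay Py] := psiS _ (phiA x Gx); exists y; rewrite Ay Py eqxx.
pose f x := odflt 1%g [pick y | (y \in A) && (psi y == phi x)].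
have fP x : x \in G -> f x \in A /\ psi (f x) = phi x.
  move=> Gx; rewrite /f; case: pickP => [y /andP[Ay /eqP] //|none].
  by have [y /andP[Ay Py]] := ex x Gx; move: (none y); rewrite Ay Py.
apply: (isog_of_bij (f := f)).
- move=> x y Gx Gy /=; have [fxA fxP] := fP x Gx; have [fyA fyP] := fP y Gy.
  have [fxyA fxyP] := fP _ (groupM Gx Gy).
  apply: psiI => //; first exact: groupM.
  by rewrite psiM // fxyP fxP fyP phiM.
- move=> x y Gx Gy E; apply: phiI => //.
  by have [_ <-] := fP x Gx; have [_ <-] := fP y Gy; rewrite E.
- by move=> x Gx; case: (fP x Gx).
- move=> y Ay; have [x Gx Px] := phiS _ (psiA y Ay); exists x => //.
  have [fxA fxP] := fP x Gx; apply: psiI => //; by rewrite fxP.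
Qed.

Lemma kAut_isog_trans (F : fieldType) (L : fieldExtType F) (gT rT : finGroupType)
  (G : {group gT}) (A : {group rT}) :
  kAut_isog L G -> (A \isog G)%g -> kAut_isog L A.
Proof.
move=> [phi [phiA phiM phiI phiS]] /isogP[f injf fA].
exists (fun x => phi (f x)); split.
- by move=> x Ax; apply: phiA; rewrite -fA mem_morphim.
- move=> x y Ax Ay /=; rewrite morphM // phiM // -fA mem_morphim //.
- move=> x y Ax Ay /= E; apply: (injmP injf) => //; apply: phiI => //;
  by rewrite -fA mem_morphim.
- move=> g /phiS[z]; rewrite -fA => /morphimP[x Dx Ax ->] <-; by exists x.
Qed.

Section Core.
Variables (k : fieldType) (E : splittingFieldType k) (K : {subfield E}).
Hypothesis galE : galois 1 {:E}.
Let H := 'Gal({:E} / K)%G.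

Lemma galK_E : galois K {:E}.
Proof. by apply: galoisS galE; rewrite sub1v subvf. Qed.

Lemma fixK : fixedField H = K.
Proof. exact/galois_fixedField/galK_E. Qed.

Lemma H_fix (t : gal_of {:E}) a : t \in H -> a \in K -> t a = a.
Proof. by move=> tH aK; apply: (fixed_gal (subvf K) tH aK). Qed.

Lemma galVK (t : gal_of {:E}) a : t ((t^-1)%g a) = a.
Proof. by rewrite -galM ?memvf // mulVg gal_id. Qed.

Lemma galKV (t : gal_of {:E}) a : (t^-1)%g (t a) = a.
Proof. by rewrite -galM ?memvf // mulgV gal_id. Qed.

Lemma normK (s : gal_of {:E}) a : s \in 'N(H)%g -> a \in K -> s a \in K.
Proof.
move=> sN aK; rewrite -fixK; apply/fixedFieldP; first exact: memvf.
move=> t tH.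
have rH : (t ^ (s^-1))%g \in H by rewrite memJ_norm // groupV.
have : (t ^ (s^-1))%g a = a by apply: H_fix.
rewrite /conjg invgK !galM ?memvf // => E1.
by rewrite -{2}E1 galVK.
Qed.

Lemma repr_act (c : coset_of H) (x : gal_of {:E}) a :
  x \in 'N(H)%g -> coset H x = c -> a \in K -> ((repr c)^-1)%g a = (x^-1)%g a.
Proof.
move=> xN <- aK.
have : repr (coset H x) \in (H :* x)%g by rewrite -val_coset // mem_repr_coset.
case/rcosetP=> h hH ->; rewrite invMg galM ?memvf //.
by apply: H_fix; [rewrite groupV | apply: normK; rewrite ?groupV].
Qed.

Definition phiC (c : coset_of H) : 'End(subvs_of K) :=
  (linfun (vsproj K) \o ((repr c)^-1)%g \o linfun vsval)%VF.

Lemma phiCE c v : vsval (phiC c v) = ((repr c)^-1)%g (vsval v).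
Proof.
rewrite /phiC !comp_lfunE !lfunE /= vsprojK //.
by apply: normK; rewrite ?groupV ?repr_coset_norm ?subvsP.
Qed.

Lemma core_kAut : kAut_isog (subvs_of K) ('N(H) / H)%G.
Proof.
exists phiC; split.
- move=> c _; rewrite kAutfE; apply/kHom_lrmorphism; split.
    move=> u v; apply: subvs_inj; by rewrite rmorphM /= !phiCE rmorphM /=.
  by apply: subvs_inj; rewrite phiCE !rmorph1.
- move=> c d _ _; apply/lfunP=> v; apply: subvs_inj.
  rewrite comp_lfunE !phiCE.
  have xN := repr_coset_norm c.
  have yN := repr_coset_norm d.
  have cd : coset H (repr c * repr d)%g = (c * d)%g.
    by rewrite morphM //= !coset_reprK.
  rewrite (repr_act (groupM xN yN) cd (subvsP v)) invMg galM ?memvf //.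
- move=> c d _ _ eqcd.
  move: (repr_coset_norm c) (repr_coset_norm d) (coset_reprK c) (coset_reprK d).
  move: (repr c) (repr d) eqcd => x y eqcd xN yN cx dy.
  have e1 b : b \in K -> (x^-1)%g b = (y^-1)%g b.
    move=> bK; have := congr1 (fun f : 'End(subvs_of K) => vsval (f (vsproj K b))) eqcd.
    by rewrite /= !phiCE vsprojK // (repr_act xN cx bK) (repr_act yN dy bK).
  have rH : (x^-1 * y)%g \in H.
    have sK : (K <= {:E})%VS by apply: subvf.
    rewrite -sub1set (galois_connection _ sK); apply/subvP=> b bK.
    apply/fixedFieldP; first exact: memvf.
    by move=> r /set1P ->; rewrite galM ?memvf // e1 // galVK.
  by rewrite -cx -dy -[y](mulKVg x) coset_kerr.
- move=> f fA.
  pose g : 'End(E) := (linfun vsval \o f \o linfun (vsproj K))%VF.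
  have gE a : a \in K -> g a = vsval (f (vsproj K a)).
    by move=> aK; rewrite /g !comp_lfunE !lfunE.
  have fM : multiplicative f by apply/kHom_lrmorphism; rewrite -kAutfE.
  have ghom : kHom 1 K g.
    rewrite k1HomE; apply/ahom_inP; split.
      move=> a b aK bK; rewrite !gE ?rpredM //.
      have -> : vsproj K (a * b) = vsproj K a * vsproj K b.
        by apply: subvs_inj; rewrite rmorphM /= !vsprojK ?rpredM.
      by rewrite fM.1 rmorphM.
    rewrite gE ?mem1v //.
    have -> : vsproj K 1 = 1 by apply: subvs_inj; rewrite vsprojK ?mem1v ?rmorph1.
    by rewrite fM.2 rmorph1.
  have [t tG gt] := kHom_to_gal (K := 1%AS) (M := K) (E := {:E}%AS) (introT andP (conj (sub1v K) (subvf K))) (normalFieldf 1%AS) ghom.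
  have tK : (t @: K)%VS = K.
    rewrite -(eq_in_limg gt); apply/eqP; rewrite eqEsubv; apply/andP; split.
      by apply/subvP=> _ /memv_imgP[a aK ->]; rewrite gE ?subvsP.
    apply/subvP=> b bK.
    have : vsproj K b \in (f @: fullv)%VS by move: fA => /andP[_ /eqP->]; exact: memvf.
    case/memv_imgP=> w _ Dw.
    have -> : b = g (vsval w) by rewrite gE ?subvsP // vsvalK -Dw vsprojK.
    by apply: memv_img; apply: subvsP.
  have tN : t \in 'N(H)%g.
    by apply/normP; rewrite /H /= gal_conjg tK.
  exists (coset H (t^-1)%g); first by rewrite mem_quotient ?groupV.
  apply/lfunP=> v; apply: subvs_inj.
  rewrite phiCE (repr_act (groupVr tN) erefl (subvsP v)) invgK -gt ?subvsP //.
  by rewrite gE ?subvsP // vsvalK.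
Qed.
End Core.

Lemma kAut_mult (F : fieldType) (L : fieldExtType F) (f : 'End(L)) :
  kAut 1 fullv f <-> multiplicative f.
Proof. by rewrite kAutfE; split => /kHom_lrmorphism. Qed.

Lemma kAut_isog_iso (F : fieldType) (L M : fieldExtType F) (gT : finGroupType)
  (G : {group gT}) (f : 'Hom(L, M)) (g : 'Hom(M, L)) :
  multiplicative f -> cancel f g -> cancel g f -> kAut_isog M G -> kAut_isog L G.
Proof.
move=> fM fg gf [phi [phiA phiM phiI phiS]].
have gM : multiplicative g.
  split; last by rewrite -fM.2 fg.
  by move=> a b; rewrite -{1}(gf a) -{1}(gf b) -fM.1 fg.
have mulC (h : 'End(M)) : multiplicative h -> multiplicative (g \o h \o f)%VF.
  move=> hM; split; last by rewrite !comp_lfunE fM.2 hM.2 gM.2.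
  by move=> a b; rewrite !comp_lfunE fM.1 hM.1 gM.1.
exists (fun x => (g \o phi x \o f)%VF); split.
- by move=> x Gx; apply/kAut_mult/mulC/kAut_mult/phiA.
- move=> x y Gx Gy; apply/lfunP=> a; rewrite phiM //.
  by rewrite !comp_lfunE gf.
- move=> x y Gx Gy E; apply: phiI => //; apply/lfunP=> b.
  have := congr1 (fun h : 'End(L) => f (h (g b))) E.
  by rewrite /= !comp_lfunE !gf.
- move=> h /kAut_mult hM.
  have hM' : multiplicative (f \o h \o g)%VF.
    split; last by rewrite !comp_lfunE gM.2 hM.2 fM.2.
    by move=> a b; rewrite !comp_lfunE gM.1 hM.1 fM.1.
  have [x Gx Dx] := phiS _ (proj2 (kAut_mult _) hM').
  exists x => //; apply/lfunP=> a; by rewrite !comp_lfunE Dx !comp_lfunE !fg.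
Qed.

Lemma sep_ahom (F : fieldType) (L M : fieldExtType F) (f : 'AHom(L, M)) :
  separable 1 {:M} -> separable 1 {:L}.
Proof.
move=> /separableP sepM; apply/separableP => y _.
rewrite /separable_element -(separable_map f) map_minPoly aimg1.
exact: sepM (memvf _).
Qed.

Lemma galT (k : fieldType) (E : splittingFieldType k) :
  'Gal({:E} / 1)%g = [set: gal_of {:E}].
Proof.
apply/setP=> x; rewrite inE gal_kAut ?sub1v //; apply/kAut_mult.
by split; [move=> a b; rewrite rmorphM | rewrite rmorph1].
Qed.

Definition map_poly_extField (F : fieldType) (L : fieldExtType F) :=
  map_poly (in_alg L) : {poly F} -> {poly L}.

Local Notation "p ^%:A" := (map_poly_extField _ p)
  (format "p ^%:A") : ring_scope.

Local Open Scope ring_scope.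
Lemma SplitsExists (F : fieldType) (p : {poly F}) :
  p != 0 -> exists (L : fieldExtType F) (zs : seq L), p^%:A %= \prod_(z <- zs) ('X - z%:P).
Proof.
have mapXsubC (f : {rmorphism _ -> _}) x:
    map_poly f ('X - x%:P) = 'X - (f x)%:P.
  by rewrite rmorphB /= map_polyX map_polyC.
move=> nz_p; pose splits q := exists zs, q %= \prod_(z <- zs) ('X - z%:P).
move: {2}_.+1 (ltnSn (size p)) => n; elim: n => // n IHn in F p nz_p * => lbn.
have [Cp|C'p] := leqP (size p) 1.
  exists F^o, [::].
  by rewrite big_nil -size_poly_eq1 size_map_poly eqn_leq Cp size_poly_gt0.
have [r r_dv_p irr_r]: exists2 r, r %| p & irreducible_poly r.
  suff IH: forall m (s : {poly F}), size s = m -> (1 < size s)%N ->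
     exists2 r, r %| s & irreducible_poly r by exact: IH.
  elim/ltn_ind=> m IHm s Ds s1.
  case: (classic (exists2 q : {poly F}, (size q != 1%N) && (q %| s) & ~~ (q %= s))).
    case=> q /andP[q1 qs] nqs.
    have s0 : s != 0 by rewrite -size_poly_gt0 ltnW.
    have q0 : q != 0 by apply: contraNneq s0 => q0; move: qs; rewrite q0 dvd0p.
    have ltq : (size q < m)%N.
      rewrite -Ds ltn_neqAle dvdp_leq // andbT; apply: contra nqs.
      by rewrite dvdp_size_eqp.
    have [|r rq irr] := IHm _ ltq q erefl.
      by rewrite ltn_neqAle eq_sym q1 size_poly_gt0.
    by exists r => //; apply: dvdp_trans rq qs.
  move=> H; exists s => //; split => // q q1 qs.
  apply/negPn/negP => nq; apply: H; exists q => //; by rewrite q1.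
have{irr_r} [K _ [x rx0 defK]] := irredp_FAdjoin irr_r.
have{r rx0 r_dv_p} /factor_theorem/sig_eqW[q Dp]: root p^%:A x.
  by rewrite -(divpK r_dv_p) [_^%:A]rmorphM rootM rx0 orbT.
have Dszp: size p = size (q * ('X - x%:P)) by rewrite -Dp size_map_poly.
have nz_q: q != 0.
  by move: nz_p; rewrite -size_poly_eq0 Dszp size_poly_eq0 mulf_eq0 => /norP[].
have [L [zs Dq]]: exists L : fieldExtType K, splits L q^%:A.
  apply: (IHn K q nz_q).
  by rewrite ltnS Dszp size_mul ?polyXsubC_eq0 ?size_XsubC ?addn2 in lbn.
suffices: splits L p^%:A^%:A.
  rewrite -[_^%:A]map_poly_comp.
  rewrite -(eq_map_poly (fun a : F => baseField_scaleE a 1)).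
  by exists (baseFieldType L).
exists (x%:A :: zs); rewrite big_cons; set rhs := _ * _.
by rewrite Dp mulrC [_^%:A]rmorphM /= mapXsubC /= eqp_mull.
Qed.

Section InB.
Variables (k : fieldType) (L : fieldExtType k) (M : fieldExtType L).
Definition inB (x : L) : baseFieldType M := (in_alg M x : M).
Fact inB_lin : linear inB.
Proof.
move=> c x y; rewrite /inB baseField_scaleE /=.
by rewrite scalerDl scalerA mulr_algl.
Qed.
HB.instance Definition _ := GRing.isLinear.Build k L (baseFieldType M) *:%R inB inB_lin.
Fact inB_mm : monoid_morphism inB.
Proof. rewrite /inB; split; [exact: (rmorph1 (in_alg M)) | move=> x y; exact: (rmorphM (in_alg M))]. Qed.
HB.instance Definition _ := GRing.isMonoidMorphism.Build L (baseFieldType M) inB inB_mm.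
Definition inB_ahom : 'AHom(L, baseFieldType M) := linfun_ahom inB.
Lemma inB_ahomE x : inB_ahom x = inB x.
Proof. by rewrite /inB_ahom /= lfunE. Qed.
End InB.

Lemma galois_closure (k : fieldType) (L : fieldExtType k) : separable 1 {:L} ->
  exists (E : splittingFieldType k) (e : 'AHom(L, E)), galois 1 {:E}.
Proof.
move=> sepL.
set z := separable_generator 1 {:L}%AS.
have Lz : {:L}%VS = <<1; z>>%VS by rewrite {1}(eq_adjoin_separable_generator sepL (sub1v _)).
have /polyOver1P[q Dp] := minPolyOver 1 z.
have sepq : separable_poly q.
  have := separable_generatorP {:L}%AS 1%AS; rewrite /separable_element -/z Dp.
  by rewrite separable_map.
have p0 : minPoly 1 z != 0 by rewrite monic_neq0 ?monic_minPoly.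
have [M [zs Dzs]] := SplitsExists p0.
pose M' := baseFieldType M.
have Dq : map_poly (in_alg M') q = map_poly (in_alg M) (minPoly 1 z).
  rewrite Dp -map_poly_comp; apply: eq_map_poly => c /=.
  by rewrite baseField_scaleE.
pose zs' : seq M' := zs.
have Dq' : map_poly (in_alg M') q %= \prod_(x <- zs') ('X - x%:P) by rewrite Dq.
pose E0 : {subfield M'} := <<1 & zs'>>%AS.
pose E := subvs_of E0.
pose toL := linfun (vsval : E -> M').
have [ws Dws]: exists ws : seq E, map toL ws = zs'.
  exists (map (vsproj _) zs'); rewrite -map_comp map_id_in // => y ys_y.
  by rewrite /= lfunE /= vsprojK ?seqv_sub_adjoin.
have splitE : splittingFieldFor 1 (map_poly (in_alg E) q) fullv.
  exists ws.
    set lhs := (lhs in lhs %= _); set rhs := (rhs in _ %= rhs).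
    suffices: map_poly toL lhs %= map_poly toL rhs by rewrite eqp_map.
    rewrite -Dws big_map in Dq'; apply: etrans Dq'; apply: congr2.
      by rewrite -map_poly_comp; apply/eq_map_poly=> x; apply: rmorph_alg.
    rewrite rmorph_prod; apply/eq_bigr=> w _.
    by rewrite rmorphB /= map_polyX map_polyC.
  set Lzs := LHS; pose Lys := (toL @: Lzs)%VS; apply/vspaceP=> u.
  have: val u \in Lys by rewrite /Lys aimg_adjoin_seq aimg1 Dws (valP u).
  by case/memv_imgP=> v Lzs_v; rewrite memvf lfunE => /val_inj->.
have axE : splitting_field_axiom E.
  exists (map_poly (in_alg E) q) => //; apply/polyOver1P; by exists q.
pose ES : splittingFieldType k := HB.pack E (FieldExt_isSplittingField.Build k E axE).
pose i := inB_ahom M.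
have izE0 : i z \in E0.
  apply: seqv_sub_adjoin; rewrite -root_prod_XsubC -(eqp_root Dq') Dq inB_ahomE.
  by rewrite /inB /root horner_map /= (rootP (root_minPoly _ _)) scale0r.
have iE0 x : i x \in E0.
  have : (i @: fullv <= E0)%VS.
    rewrite Lz aimg_adjoin aimg1; apply/FadjoinP; split=> //; exact: sub1v.
  by move/subvP; apply; apply: memv_img; apply: memvf.
pose e : 'Hom(L, E) := (linfun (vsproj E0) \o i)%VF.
have eE x : vsval (e x) = i x by rewrite /e comp_lfunE lfunE /= vsprojK.
have eA : ahom_in fullv e.
  apply/ahom_inP; split.
    by move=> x y _ _; apply: subvs_inj; rewrite rmorphM /= !eE rmorphM.
  by apply: subvs_inj; rewrite eE !rmorph1.
exists ES, (AHom eA).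
apply/splitting_galoisField; exists (map_poly (in_alg ES) q); split.
- by apply/polyOver1P; exists q.
- by rewrite separable_map.
- exact: splitE.
Qed.

End Helpers.

Section GroupHelpers.
Local Open Scope group_scope.
Lemma norm_quo_transfer (aT rT : finGroupType) (H' : {group aT}) :
  [set: aT] \isog [set: rT] -> exists H : {group rT}, 'N(H) / H \isog 'N(H') / H'.
Proof.
case/isogP=> f injf imf.
exists (f @* H')%G.
have NH : 'N(f @* H') = f @* 'N(H').
  by rewrite (injm_norm injf (subsetT H')) imf setTI.
have fD x : x \in [set: aT] by rewrite inE.
have fM x y : f (x * y) = f x * f y by rewrite morphM.
have finj x y : f x = f y -> x = y by move=> E; apply: (injmP injf) => //.
have reprE (c : coset_of H') : exists2 h, h \in H' & repr c = h * repr c.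
  by exists 1; rewrite ?group1 ?mul1g.
rewrite isog_sym.
pose q (c : coset_of H') := coset (f @* H') (f (repr c)).
have qN (c : coset_of H') : f (repr c) \in 'N(f @* H').
  by rewrite NH mem_morphim ?repr_coset_norm.
have qE x : x \in 'N(H') -> q (coset H' x) = coset (f @* H') (f x).
  move=> xN; rewrite /q.
  have : repr (coset H' x) \in H' :* x by rewrite -val_coset // mem_repr_coset.
  case/rcosetP=> h hH ->; rewrite fM coset_kerl //.
  by rewrite mem_morphim.
apply: (isog_of_bij (f := q)).
- move=> c d cN dN /=.
  rewrite -{1}(coset_reprK c) -{1}(coset_reprK d) -morphM ?repr_coset_norm //=.
  by rewrite qE ?groupM ?repr_coset_norm // fM morphM //=.
- move=> c d _ _; rewrite /q => E.
  have [z zH Ez] := kercoset_rcoset (qN c) (qN d) E.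
  case/morphimP: zH => w _ wH Dz.
  rewrite -(coset_reprK c) -(coset_reprK d).
  have -> : repr c = w * repr d by apply: finj; rewrite fM -Dz.
  by rewrite coset_kerl.
- move=> c _; rewrite /q; apply: mem_quotient; exact: qN.
- move=> c /morphimP[u uN _ ->].
  move: uN; rewrite /= NH => /morphimP[x _ xN ->].
  exists (coset H' x); first by rewrite mem_quotient.
  by rewrite qE.
Qed.

Lemma cayley_S (gT : finGroupType) (G : {group gT}) :
  exists A : {group {perm 'I_#|gT|}}, G \isog A.
Proof.
pose rf (x : gT) (i : 'I_#|gT|) := enum_rank (enum_val i * x).
have rinj x : injective (rf x).
  by move=> i j /enum_rank_inj /mulIg /enum_val_inj.
pose r x := perm (rinj x).
have rM : {in G &, {morph r : x y / x * y}}.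
  move=> x y _ _ /=; apply/permP=> i; rewrite permM !permE /rf enum_rankK.
  by rewrite mulgA.
exists (Morphism rM @* G)%G; apply/isogP; exists (Morphism rM) => //.
apply/injmP=> x y _ _ /= /permP /(_ (enum_rank 1)).
by rewrite !permE /rf enum_rankK !mul1g => /enum_rank_inj.
Qed.

Definition Code := {m : nat & {set {perm 'I_m}}}.
Definition decode (n : nat) : Code :=
  if unpickle n is Some c then c else Tagged (fun m => {set {perm 'I_m}}) (set0 : {set {perm 'I_0}}).
Lemma decodeK : cancel pickle decode.
Proof. by move=> c; rewrite /decode pickleK. Qed.

End GroupHelpers.

Lemma core_kAut' (k : fieldType) (E : splittingFieldType k) (K : {subfield E})
  (H0 : {group gal_of {:E}}) :
  galois 1 {:E} -> 'Gal({:E} / K)%g = H0 -> kAut_isog (subvs_of K) ('N(H0) / H0)%G.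
Proof.
move=> galE EH; have -> : H0 = 'Gal({:E} / K)%G by apply: val_inj; rewrite /= EH.
exact: core_kAut.
Qed.

Theorem mainTheorem2 (k : fieldType) :
  (forall (gT : finGroupType) (G : {group gT}),
     exists L : fieldExtType k, separable 1%VS (fullv : {vspace L}) /\ kAut_isog L G)
  <->
  (exists Gamma : nat -> finGroupType,
     REAL Gamma /\
     forall n : nat, (0 < n)%N ->
       exists L : splittingFieldType k,
         galois 1%VS (fullv : {vspace L}) /\
         ('Gal((fullv : {vspace L}) / 1%VS) \isog [set: Gamma n])%g).
Proof.
split.
- move=> HI.
  have HP (t : Code) : exists E : splittingFieldType k, galois 1 {:E} /\
      exists H : {group gal_of {:E}}, ('N(H) / H \isog <<tagged t>>)%g.
    set G := <<tagged t>>%G.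
    have [L [sepL aL]] := HI _ G.
    have [E [e galE]] := galois_closure sepL.
    exists E; split => //.
    pose K' : {subfield E} := (e @: fullv)%AS.
    exists ('Gal({:E} / K'))%G.
    have c1 := core_kAut K' galE.
    pose f : 'Hom(L, subvs_of K') := (linfun (vsproj K') \o e)%VF.
    pose g : 'Hom(subvs_of K', L) := ((e^-1)%VF \o linfun vsval)%VF.
    have eK x : e x \in K' by apply: memv_img; apply: memvf.
    have fE x : vsval (f x) = e x by rewrite /f comp_lfunE lfunE /= vsprojK.
    have fM : multiplicative f.
      split; last by apply: subvs_inj; rewrite fE !rmorph1.
      by move=> x y; apply: subvs_inj; rewrite rmorphM /= !fE rmorphM.
    have fg : cancel f g.
      by move=> x; rewrite /g comp_lfunE lfunE /= fE lker0_lfunK ?AHom_lker0.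
    have gf : cancel g f.
      move=> w; apply: subvs_inj; rewrite fE /g comp_lfunE lfunE /=.
      by rewrite limg_lfunVK // subvsP.
    have := kAut_isog_iso fM fg gf c1.
    by move=> /(kAut_isog_uniq aL); rewrite isog_sym.
  pose Ef (t : Code) := proj1_sig (constructive_indefinite_description _ (HP t)).
  have Efp t : galois 1 {:Ef t} /\
      exists H : {group gal_of {:Ef t}}, ('N(H) / H \isog <<tagged t>>)%g.
    exact: (proj2_sig (constructive_indefinite_description _ (HP t))).
  exists (fun n => (gal_of {:Ef (decode n.-1)} : finGroupType)); split.
  + move=> gT G; have [A isoA] := cayley_S G.
    pose t : Code := Tagged (fun m => {set {perm 'I_m}}) (A : {set _}).
    exists (pickle t).+1; split => //=.
    have [_ [H isoH]] := Efp (decode (pickle t)).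
    exists H; apply: isog_trans isoH _.
    have : decode (pickle t) = t by rewrite decodeK.
    move: (decode (pickle t)) => X ->.
    by rewrite /= genGid isog_sym.
  + move=> n _; exists (Ef (decode n.-1)); split; first exact: (Efp _).1.
    by rewrite galT; apply: isog_refl.
- move=> [Gam [RE HG]] gT G.
  have [n [n0 [H' isoH']]] := RE gT G.
  have [E [galE isoE]] := HG n n0.
  rewrite galT isog_sym in isoE.
  have [H isoH] := norm_quo_transfer H' isoE.
  pose K : {subfield E} := fixedField_aspace H.
  have c1 := @core_kAut' k E K H galE (gal_fixedField H).
  exists (subvs_of K); split.
    apply: (sep_ahom (linfun_ahom (vsval : subvs_of K -> E))).
    by case/and3P: galE.
  apply: kAut_isog_trans c1 _.
  rewrite isog_sym in isoH'; rewrite isog_sym in isoH.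
  exact: isog_trans isoH' isoH.
Qed.
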